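(* For every $\mu>0$ and $\delta>0$, the function $\alpha\mapsto\sigma(\mu,\alpha,\delta)$ on $[0,+\infty)$ attains its maximum at a unique point $\alpha_m=\alpha_m(\mu,\delta)\ge 0$. Moreover $\alpha_m$ depends on $(\mu,\delta)$ only through $\beta=\mu\delta$, it is non-increasing as a function of $\beta$, and: (i) if $\mu\delta\ge 1/2$ then $\alpha_m=0$; (ii) $\alpha_m\to 1$ as $\mu\delta\to 0$. In particular $\alpha_m<1$ for all $\mu,\delta>0$.
   Context: For $\mu,\delta>0$ and $\alpha\ge 0$ define the steady state activity $a_\infty(\mu,\alpha,\delta):=\frac{1}{\delta+1/\mu}$ if $\alpha=0$, and for $\alpha>0$ \[a_\infty(\mu,\alpha,\delta):=\frac1\delta-\frac{1+\alpha+\mu\delta-\sqrt{\Delta(\mu,\alpha,\delta)}}{2\alpha\delta},\qquad \Delta(\mu,\alpha,\delta):=(1+\mu\delta-\alpha)^2+4\mu\alpha\delta\] (in all cases $a_\infty$ is the unique positive solution $a$ of $a\big(\delta+\frac1{\mu+\alpha a}\big)=1$; it is the stationary firing rate of the mean-field limit of age-dependent Hawkes processes with intensity $(\mu+x)\mathbf 1_{s\ge\delta}$, input $\mu$, refractory period $\delta$, mean connectivity $\alpha$). The stimulus sensitivity is $\sigma(\mu,\alpha,\delta):=\frac{\partial}{\partial\mu}a_\infty(\mu,\alpha,\delta)$; explicitly $\sigma=1/(1+\mu\delta)^2$ for $\alpha=0$ and $\sigma=-\frac1{2\alpha}+\frac{1+\mu\delta+\alpha}{2\alpha\sqrt{\Delta}}$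 for $\alpha>0$. The critical value of the connectivity is $\alpha_c=1$. *)

(* Defs.v *)
From Stdlib Require Import Reals Lra.
Open Scope R_scope.

Definition Delta (mu alpha delta : R) : R :=
  (1 + mu * delta - alpha) ^ 2 + 4 * mu * alpha * delta.

Definition a_inf (mu alpha delta : R) : R :=
  if Req_EM_T alpha 0 then 1 / (delta + 1 / mu)
  else 1 / delta - (1 + alpha + mu * delta - sqrt (Delta mu alpha delta)) / (2 * alpha * delta).

(* Stimulus sensitivity sigma = d a_inf / d mu, given by its explicit formula. *)
Definition sigma (mu alpha delta : R) : R :=
  if Req_EM_T alpha 0 then 1 / (1 + mu * delta) ^ 2
  else - (1 / (2 * alpha))
       + (1 + mu * delta + alpha) / (2 * alpha * sqrt (Delta mu alpha delta)).

Definition is_max_point (mu delta a : R) : Prop :=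
  0 <= a /\ forall alpha, 0 <= alpha -> sigma mu alpha delta <= sigma mu a delta.

(* Main.v *)
Require Import Defs.
From Stdlib Require Import Reals Lra Psatz.
Open Scope R_scope.

Definition fx (b x : R) := x * x + 2 * (x * x * x) - b.

Lemma fx_cont b : continuity (fx b).
Proof. unfold fx. reg. Qed.

Lemma fx0 b : 0 < b -> fx b 0 < 0.
Proof. unfold fx; intros; lra. Qed.
Lemma fx1 b : 0 < b -> 0 < fx b (1 + b).
Proof. unfold fx; intros; nra. Qed.
Lemma lt01b b : 0 < b -> 0 < 1 + b.
Proof. lra. Qed.

Definition xs (b : R) : R :=
  match Rlt_dec 0 b with
  | left h => proj1_sig (IVT (fx b) 0 (1 + b) (fx_cont b) (lt01b b h) (fx0 b h) (fx1 b h))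
  | right _ => 0
  end.

Lemma xs_spec b : 0 < b -> 0 < xs b /\ xs b * xs b + 2 * (xs b * xs b * xs b) = b.
Proof.
  intro hb. unfold xs. destruct (Rlt_dec 0 b) as [h|h]; [|lra].
  destruct (IVT _ _ _ _ _ _ _) as [z [hz1 hz2]]; simpl. unfold fx in hz2.
  split; [|lra]. destruct hz1 as [hz1 _]. destruct (Req_dec z 0); [subst; lra| lra].
Qed.

Lemma xs_mono b1 b2 : 0 < b1 -> b1 <= b2 -> xs b1 <= xs b2.
Proof.
  intros h1 h12. destruct (xs_spec b1 h1) as [p1 e1].
  destruct (xs_spec b2 ltac:(lra)) as [p2 e2].
  destruct (Rle_dec (xs b1) (xs b2)) as [|h]; [auto|].
  exfalso. set (u := xs b1) in *. set (v := xs b2) in *.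
  assert (v < u) by lra.
  assert (v*v < u*u) by nra. assert (v*v*v < u*u*u) by nra. lra.
Qed.

Definition amf (b : R) : R := Rmax 0 (1 - 3 * (xs b * xs b) - 2 * (xs b * xs b * xs b)).

Definition Aof (b p : R) := (1 - p) * (b + p) / p.
Definition Fof (b p : R) := p * p / ((b + p * p) * (b + p)).

Lemma sigma_p mu delta alpha : 0 < mu -> 0 < delta -> 0 <= alpha ->
  exists p, 0 < p <= 1 /\ alpha = Aof (mu * delta) p /\ Defs.sigma mu alpha delta = Fof (mu * delta) p.
Proof.
  intros hm hd ha.
  set (b := mu * delta).
  assert (hb : 0 < b) by (unfold b; nra).
  set (t := alpha + b - 1).
  assert (hD : Defs.Delta mu alpha delta = t * t + 4 * b) by (unfold Defs.Delta, t, b; ring).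
  set (r := sqrt (Defs.Delta mu alpha delta)).
  assert (hr2 : r * r = t * t + 4 * b) by (unfold r; rewrite sqrt_sqrt; [lra| rewrite hD; nra]).
  assert (hr0 : 0 <= r) by apply sqrt_pos.
  assert (hrt1 : t < r) by (destruct (Rlt_le_dec t r) as [|h]; [auto| assert (r*r <= t*t) by nra; lra]).
  assert (hrt2 : - t < r) by (destruct (Rlt_le_dec (-t) r) as [|h]; [auto| assert (r*r <= t*t) by nra; lra]).
  set (p := (r - t) / 2).
  assert (hp0 : 0 < p) by (unfold p; lra).
  assert (hrt3 : r <= t + 2) by (destruct (Rle_lt_dec r (t+2)) as [|h]; [auto| assert ((t+2)*(t+2) < r*r) by (unfold t in *; nra); unfold t in *; nra]).
  assert (hp1 : p <= 1) by (unfold p; lra).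
  assert (hq : p * p + t * p - b = 0) by (unfold p; nra).
  assert (hrp : r = t + 2 * p) by (unfold p; lra).
  assert (htp : t = (b - p * p) / p).
  { apply (Rmult_eq_reg_r p); [|lra]. unfold Rdiv. rewrite Rmult_assoc, Rinv_l; lra. }
  assert (hA : alpha = Aof b p).
  { unfold Aof. apply (Rmult_eq_reg_r p); [|lra]. unfold Rdiv. rewrite Rmult_assoc, Rinv_l; [|lra]. unfold t in hq. nra. }
  exists p. split; [lra|]. split; [exact hA|].
  unfold Defs.sigma. destruct (Req_EM_T alpha 0) as [h0|h0].
  - assert (p = 1).
    { rewrite h0 in hA. unfold Aof in hA.
      assert (hh : (1 - p) * (b + p) = 0).
      { apply (Rmult_eq_reg_r (/ p)); [|apply Rinv_neq_0_compat; lra]. lra. }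
      destruct (Rmult_integral _ _ hh); nra. }
    subst p. rewrite H. unfold Fof. fold b. field. lra.
  - fold r. fold b.
    assert (hp1' : p < 1).
    { destruct (Req_dec p 1) as [e|]; [|lra]. exfalso. apply h0. rewrite hA, e. unfold Aof. field. }
    rewrite hrp, hA. rewrite htp. unfold Aof, Fof. field.
    repeat split; try lra; try nra.
Qed.

Lemma Aof_inj b p q : 0 < b -> 0 < p -> 0 < q -> Aof b p = Aof b q -> p = q.
Proof.
  intros hb hp hq e. unfold Aof in e.
  assert (e2 : (1 - p) * (b + p) * q = (1 - q) * (b + q) * p).
  { apply (Rmult_eq_reg_r (/ (p * q))); [|apply Rinv_neq_0_compat; nra].
    replace ((1 - p) * (b + p) * q * / (p * q)) with ((1 - p) * (b + p) / p) by (field; lra).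
    rewrite e. field; lra. }
  assert (e3 : (q - p) * (b + p * q) = 0) by nra.
  destruct (Rmult_integral _ _ e3); nra.
Qed.

Definition G (b m : R) := m * m * m - b * m - 2 * (b * b).

Lemma F_strict b m p : 0 < b -> 0 < m -> 0 < p -> G b m <= 0 -> (G b m = 0 \/ p <= m) -> p <> m ->
  Fof b p < Fof b m.
Proof.
  intros hb hm hp hG hor hne.
  assert (hN : 0 < (m - p) * (m - p) * (b * b + m * m * p) - p * (m - p) * G b m).
  { assert (0 < (m - p) * (m - p)) by (assert (m - p <> 0) by lra; nra).
    assert (0 < (m - p) * (m - p) * (b * b + m * m * p)) by (apply Rmult_lt_0_compat; [lra|]; assert (0 < m*m*p) by (apply Rmult_lt_0_compat; nra); nra).
    destruct hor as [h|h]; [rewrite h; lra|].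
    assert (0 <= p * (m - p)) by nra. assert (p * (m - p) * G b m <= 0) by nra. lra. }
  assert (0 < b + m * m) by nra. assert (0 < b + p * p) by nra.
  assert (e : Fof b m - Fof b p = ((m - p) * (m - p) * (b * b + m * m * p) - p * (m - p) * G b m)
      / ((b + m * m) * (b + m) * (b + p * p) * (b + p))).
  { unfold Fof, G. field. repeat split; lra. }
  assert (0 < Fof b m - Fof b p); [|lra].
  rewrite e. apply Rdiv_lt_0_compat; [exact hN|].
  assert (0 < b + m * m) by nra. assert (0 < b + p * p) by nra. 
  assert (0 < (b + m * m) * (b + m)) by nra.
  assert (0 < (b + m * m) * (b + m) * (b + p * p)) by nra. nra.
Qed.

Definition mof (b : R) := Rmin 1 (xs b + 2 * (xs b * xs b)).

Lemma mof_spec b : 0 < b ->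
  0 < mof b <= 1 /\ G b (mof b) <= 0 /\ (mof b < 1 -> G b (mof b) = 0) /\ amf b = Aof b (mof b).
Proof.
  intros hb. destruct (xs_spec b hb) as [hx e]. unfold mof, amf, G.
  set (x := xs b) in *.
  destruct (Rle_lt_dec 1 (x + 2 * (x * x))) as [h|h].
  - rewrite Rmin_left by lra.
    assert (hx2 : 1/2 <= x) by (destruct (Rle_lt_dec (1/2) x); [auto|nra]).
    assert (hb2 : 1/2 <= b) by nra.
    rewrite Rmax_left by nra.
    split; [lra|]. split; [nra|]. split; [lra|]. unfold Aof. field.
  - rewrite Rmin_right by lra.
    assert (hm : 0 < x + 2 * (x * x)) by nra.
    assert (hbm : b = x * (x + 2 * (x * x))) by lra.
    split; [lra|]. 
    assert (hG : (x + 2 * (x * x)) * (x + 2 * (x * x)) * (x + 2 * (x * x)) - b * (x + 2 * (x * x)) - 2 * (b * b) = 0)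
      by (rewrite hbm; ring).
    split; [lra|]. split; [intros; exact hG|].
    rewrite Rmax_right by nra. unfold Aof. rewrite hbm. field. lra.
Qed.

Lemma sig_am mu delta : 0 < mu -> 0 < delta ->
  Defs.sigma mu (amf (mu * delta)) delta = Fof (mu * delta) (mof (mu * delta)).
Proof.
  intros hm hd. assert (hb : 0 < mu * delta) by nra.
  destruct (mof_spec _ hb) as [hm1 [hG [hG1 he]]].
  assert (h0 : 0 <= amf (mu * delta)) by (unfold amf; apply Rmax_l).
  destruct (sigma_p mu delta _ hm hd h0) as [p [hp [ea es]]].
  rewrite es. f_equal. apply (Aof_inj (mu * delta)); try lra; congruence.
Qed.

Lemma sig_le mu delta alpha : 0 < mu -> 0 < delta -> 0 <= alpha ->
  Defs.sigma mu alpha delta <= Defs.sigma mu (amf (mu * delta)) delta /\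
  (alpha <> amf (mu * delta) -> Defs.sigma mu alpha delta < Defs.sigma mu (amf (mu * delta)) delta).
Proof.
  intros hm hd ha. assert (hb : 0 < mu * delta) by nra.
  destruct (mof_spec _ hb) as [hm1 [hG [hG1 he]]].
  rewrite sig_am by lra.
  destruct (sigma_p mu delta _ hm hd ha) as [p [hp [ea es]]].
  rewrite es.
  assert (hs : p <> mof (mu * delta) -> Fof (mu * delta) p < Fof (mu * delta) (mof (mu * delta))).
  { intro hne. apply F_strict; try lra.
    all: destruct (Rlt_le_dec (mof (mu * delta)) 1); [left; auto| right; lra]. }
  split.
  - destruct (Req_dec p (mof (mu * delta))) as [e|e]; [rewrite e; lra|]. left; auto.
  - intro hne. apply hs. intro e. apply hne. rewrite ea, he, e. reflexivity.
Qed.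

Theorem theorem1 :
  exists am : R -> R,
    (forall mu delta, 0 < mu -> 0 < delta ->
       is_max_point mu delta (am (mu * delta)) /\
       (forall a, is_max_point mu delta a -> a = am (mu * delta))) /\
    (forall b1 b2, 0 < b1 -> b1 <= b2 -> am b2 <= am b1) /\
    (forall mu delta, 0 < mu -> 0 < delta -> mu * delta >= 1 / 2 ->
       am (mu * delta) = 0) /\
    (forall eps, 0 < eps -> exists eta, 0 < eta /\
       forall mu delta, 0 < mu -> 0 < delta -> mu * delta < eta ->
         Rabs (am (mu * delta) - 1) < eps) /\
    (forall mu delta, 0 < mu -> 0 < delta -> am (mu * delta) < 1).
Proof.
  exists amf. split; [|split; [|split; [|split]]].
  - intros mu delta hm hd. split.
    + split; [unfold amf; apply Rmax_l|]. intros alpha ha. apply (sig_le mu delta alpha hm hd ha).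
    + intros a [ha hmax]. destruct (Req_dec a (amf (mu * delta))) as [|hne]; [auto|].
      exfalso. destruct (sig_le mu delta a hm hd ha) as [_ hlt].
      specialize (hlt hne). specialize (hmax (amf (mu * delta)) ltac:(unfold amf; apply Rmax_l)). lra.
  - intros b1 b2 h1 h12. pose proof (xs_mono b1 b2 h1 h12) as hx.
    destruct (xs_spec b1 h1) as [hx1 _]. unfold amf.
    set (u := xs b1) in *. set (v := xs b2) in *.
    assert (u * u <= v * v) by nra. assert (u * u * u <= v * v * v) by nra.
    apply Rmax_case_strong; intros; [apply Rmax_l|].
    eapply Rle_trans; [|apply Rmax_r]. lra.
  - intros mu delta hm hd hb. assert (hb0 : 0 < mu * delta) by nra.
    destruct (xs_spec _ hb0) as [hx e]. unfold amf. set (x := xs (mu * delta)) in *.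
    assert (hx2 : 1/2 <= x) by (destruct (Rle_lt_dec (1/2) x); [auto|nra]).
    apply Rmax_left. nra.
  - intros eps he. exists (Rmin (1/4) (eps / 4)). split.
    { apply Rmin_pos; lra. }
    intros mu delta hm hd hb. assert (hb0 : 0 < mu * delta) by nra.
    assert (hb1 : mu * delta < 1/4) by (eapply Rlt_le_trans; [exact hb| apply Rmin_l]).
    assert (hb2 : mu * delta < eps/4) by (eapply Rlt_le_trans; [exact hb| apply Rmin_r]).
    destruct (xs_spec _ hb0) as [hx e]. unfold amf. set (x := xs (mu * delta)) in *.
    set (b := mu * delta) in *.
    assert (hx2 : x < 1/2) by (destruct (Rle_lt_dec (1/2) x); [nra|auto]).
    rewrite Rmax_right by nra.
    rewrite Rabs_left by nra. nra.
  - intros mu delta hm hd. assert (hb0 : 0 < mu * delta) by nra.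
    destruct (xs_spec _ hb0) as [hx e]. unfold amf. set (x := xs (mu * delta)) in *.
    apply Rmax_case_strong; intros; [lra|]. nra.
Qed.
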